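(* Let $G_c^w$ be an edge-coloured edge-weighted multi-graph (half-edge colouring $c$, edge weights $w$) which is g-GHZ. Then there is a weight function $w'$ on the edges such that $G_c^{w'}$ (same multi-graph, same half-edge colouring) is a GHZ graph with the same dimension as $G_c^w$.
   Context: Multi-graphs have no self-loops. Each edge $e$ between $u$ and $v$ consists of two half-edges $e_u$ and $e_v$. A half-edge colouring is a function $c$ from the set of half-edges to $\mathbb{N}_0$; each edge $e$ also gets a weight $w(e)\in\mathbb{C}$. The weight of a perfect matching $P$ is $\prod_{e\in P}w(e)$. A vertex colouring is a map $vc:V\to\mathbb{N}_0$; it filters out the subgraph consisting of all edges $e$ (between $u,v$) with $c(e_u)=vc(u)$ and $c(e_v)=vc(v)$ (with the same weights). The weight of $vc$ is the sum of the weights of all perfect matchings of this filtered subgraph; $vc$ is feasible if the filtered subgraph has at least one perfect matching (an infeasible colouring has weight $0$). The graph is GHZ if every feasible monochromatic vertex colouring has weight $1$ and every non-monochromatic vertex colouring has weight $0$. It is g-GHZ if every feasible monochromatic vertex colouring has non-zero weight and every non-monochromatic vertex colouring has weight $0$. In both cases the dimension is the number of feasible monochromatic vertex colourings. *)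

(* Defs.v *)
From mathcomp Require Import all_boot all_algebra.
From mathcomp Require Import Rstruct.
From mathcomp Require Import complex.
Set Implicit Arguments. Unset Strict Implicit. Unset Printing Implicit Defensive.
Import GRing.Theory.
Local Open Scope ring_scope.

Notation CC := (Rdefinitions.R)[i].

Section GHZ.
(* A multigraph: finite vertex type V, finite edge type E (distinct edges may
   share endpoints), each edge e joins (ends e).1 and (ends e).2.
   Half-edges of e: (e,false) at (ends e).1 and (e,true) at (ends e).2. *)
Variables (V E : finType) (ends : E -> V * V).
Variables (c : E -> bool -> nat) (w : E -> CC).

Definition incident (e : E) (v : V) : bool := ((ends e).1 == v) || ((ends e).2 == v).

Definition filtered (vc : V -> nat) (e : E) : bool :=
  (c e false == vc (ends e).1) && (c e true == vc (ends e).2).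

Definition pmb (vc : V -> nat) (P : {set E}) : bool :=
  [forall e, (e \in P) ==> filtered vc e] &&
  [forall v : V, #|[set e in P | incident e v]| == 1%N].

Definition vc_weight (vc : V -> nat) : CC :=
  \sum_(P : {set E} | pmb vc P) \prod_(e in P) w e.

Definition feasible (vc : V -> nat) : Prop := exists P, pmb vc P.

Definition monochromatic (vc : V -> nat) : Prop := exists k, forall v, vc v = k.

Definition is_GHZ : Prop :=
  (forall vc, monochromatic vc -> feasible vc -> vc_weight vc = 1) /\
  (forall vc, ~ monochromatic vc -> vc_weight vc = 0).

Definition is_gGHZ : Prop :=
  (forall vc, monochromatic vc -> feasible vc -> vc_weight vc != 0) /\
  (forall vc, ~ monochromatic vc -> vc_weight vc = 0).

(* the dimension is n: there are exactly n feasible monochromatic colourings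
   (a monochromatic colouring is determined by its colour k) *)
Definition has_dimension (n : nat) : Prop :=
  exists s : seq nat, [/\ uniq s, size s = n &
    forall k, k \in s <-> feasible (fun _ => k)].

End GHZ.

(* Main.v *)
Require Import Defs.
From mathcomp Require Import all_boot all_algebra.
From mathcomp Require Import Rstruct complex.
From Stdlib Require Import FunctionalExtensionality.
Set Implicit Arguments. Unset Strict Implicit.
Import GRing.Theory.
Local Open Scope ring_scope.

Section Aux.
Variables (V E : finType) (ends : E -> V * V) (c : E -> bool -> nat) (w : E -> CC).
Variable v0 : V.
Variable f : nat -> CC.

Definition col0 (e : E) : nat := if (ends e).1 == v0 then c e false else c e true.
Definition wsc (e : E) : CC := if incident ends e v0 then w e * f (col0 e) else w e.

Lemma prod_wsc vc P : pmb ends c vc P ->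
  \prod_(e in P) wsc e = f (vc v0) * \prod_(e in P) w e.
Proof.
move=> /andP[/forallP Hf /forallP Hc].
have := Hc v0; case/cards1P => e1 He1.
have eqs : forall F : E -> CC, \prod_(e in P | incident ends e v0) F e = F e1.
  move=> F; rewrite -(@big_set1 CC 1 *%R _ e1 F) -He1; apply: eq_bigl => e; by rewrite inE.
have : e1 \in [set e in P | incident ends e v0] by rewrite He1 set11.
rewrite inE => /andP[e1P inc1].
have fil := implyP (Hf e1) e1P.
rewrite (bigID (fun e => incident ends e v0)) [in RHS](bigID (fun e => incident ends e v0)) /=.
rewrite !eqs /wsc inc1.
have -> : col0 e1 = vc v0.
  move: fil inc1; rewrite /filtered /col0 /incident.
  case/andP => /eqP -> /eqP ->.
  by case: eqP => [-> //|_] /= /eqP ->.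
have -> : \prod_(i in P | ~~ incident ends i v0) (if incident ends i v0 then w i * f (col0 i) else w i)
  = \prod_(i in P | ~~ incident ends i v0) w i.
  by apply: eq_bigr => i /andP[_ /negbTE ->].
by rewrite mulrA [f _ * w e1]mulrC.
Qed.

Lemma weight_wsc vc : vc_weight ends c wsc vc = f (vc v0) * vc_weight ends c w vc.
Proof.
rewrite /vc_weight mulr_sumr; apply: eq_bigr => P HP; exact: prod_wsc.
Qed.
End Aux.

Theorem lemma1 (V E : finType) (ends : E -> V * V)
  (no_loops : forall e, (ends e).1 != (ends e).2)
  (c : E -> bool -> nat) (w : E -> CC) :
  is_gGHZ ends c w ->
  exists w' : E -> CC,
    is_GHZ ends c w' /\
    (forall n, has_dimension ends c n <-> has_dimension ends c n).
Proof.
move=> [Hm Hn].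
case: (pickP (fun _ : V => true)) => [v0 _ | V0].
  exists (wsc ends c w v0 (fun k => (vc_weight ends c w (fun _ => k))^-1)).
  split=> //; split.
    move=> vc [k Hk] Hfe.
    have Hvc : vc = (fun _ => k) by apply: functional_extensionality.
    have W0 := Hm vc (ex_intro _ k Hk) Hfe.
    rewrite weight_wsc Hk -Hvc mulVf //.
  move=> vc Hnm; by rewrite weight_wsc (Hn vc Hnm) mulr0.
exists w; split=> //; split; last first.
  move=> vc Hnm; exfalso; apply: Hnm; exists 0%N => v; by have := V0 v.
move=> vc _ [P0 HP0].
have E0 : forall e : E, False by move=> e; have := V0 (ends e).1.
have allP0 : forall Q : {set E}, Q = P0.
  move=> Q; apply/setP => e; by case: (E0 e).
rewrite /vc_weight (big_pred1 P0).
  by rewrite big_pred0 // => e; case: (E0 e).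
by move=> Q /=; rewrite (allP0 Q) HP0 eqxx.
Qed.
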